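(* Let $0< c\le 3$ and let $F$ be the distribution on $\{0,1\}$ with $\mathbb{P}(1)=c/3$. Then $BRev(F^3)/SRev(F^3) > 0.6$.
   Context: For i.i.d. values $X_1,\dots,X_k\sim F$ of an additive buyer: $SRev(F^k) = k\cdot\sup_{p\ge0} p\,\mathbb{P}(X_1\ge p)$ is the maximal revenue from selling each item separately at posted prices, and $BRev(F^k) = \sup_{p\ge 0} p\,\mathbb{P}(X_1+\dots+X_k\ge p)$ is the maximal revenue from selling all items as one bundle at a posted price. Here $k=3$. *)

(* Defs.v *)
From HB Require Import structures.
From mathcomp Require Import all_boot all_order all_algebra.
From mathcomp Require Import boolp classical_sets reals.
Set Implicit Arguments. Unset Strict Implicit. Unset Printing Implicit Defensive.
Import Order.TTheory GRing.Theory Num.Theory.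
Local Open Scope ring_scope.
Local Open Scope classical_set_scope.

Section Bernoulli.
Variable R : realType.

(* pmf of the distribution F on {0,1} (value [true] = 1) with P(1) = a *)
Definition bern_pmf (a : R) (b : bool) : R := if b then a else 1 - a.

Definition prodw (a : R) (k : nat) (x : {ffun 'I_k -> bool}) : R :=
  \prod_(i < k) bern_pmf a (x i).

Definition Pr (a : R) (k : nat) (E : pred {ffun 'I_k -> bool}) : R :=
  \sum_(x | E x) prodw a x.

Definition Xv (k : nat) (x : {ffun 'I_k -> bool}) (i : 'I_k) : R := (x i)%:R.

Definition SRev (a : R) (k : nat) (i0 : 'I_k) : R :=
  k%:R * sup ((fun p : R => p * Pr a (fun x => p <= Xv x i0)) @` [set p | 0 <= p]).

Definition BRev (a : R) (k : nat) : R :=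
  sup ((fun p : R => p * Pr a (k := k) (fun x => p <= \sum_(i < k) Xv x i))
         @` [set p | 0 <= p]).

End Bernoulli.

(* Main.v *)
Require Import Defs.
From HB Require Import structures.
From mathcomp Require Import all_boot all_order all_algebra.
From mathcomp Require Import boolp classical_sets reals.
From mathcomp Require Import ring lra.
Import Order.TTheory GRing.Theory Num.Theory.
Local Open Scope ring_scope.

Section S.
Variable R : realType.

Definition mk (b0 b1 b2 : bool) : {ffun 'I_3 -> bool} :=
  [ffun i : 'I_3 => nth false [:: b0; b1; b2] i].

Lemma prodw_mk (a : R) b0 b1 b2 :
  prodw a (mk b0 b1 b2) = bern_pmf a b0 * bern_pmf a b1 * bern_pmf a b2.
Proof. by rewrite /prodw !big_ord_recr big_ord0 /= !ffunE /= mul1r. Qed.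

Lemma sum_mk b0 b1 b2 :
  \sum_(i < 3) Xv R (mk b0 b1 b2) i = (b0 + b1 + b2)%N%:R :> R.
Proof. by rewrite !big_ord_recr big_ord0 /Xv /= !ffunE /= add0r !natrD. Qed.

Lemma Pr3 (a : R) (E : pred {ffun 'I_3 -> bool}) : Pr a E =
  \sum_(b0 : bool) \sum_(b1 : bool) \sum_(b2 : bool)
     (if E (mk b0 b1 b2) then bern_pmf a b0 * bern_pmf a b1 * bern_pmf a b2 else 0).
Proof.
rewrite /Pr big_mkcond /=.
rewrite (reindex (fun t : bool * bool * bool => mk t.1.1 t.1.2 t.2)) /=; last first.
  exists (fun x : {ffun 'I_3 -> bool} => (x ord0, x (Ordinal (isT : (1 < 3)%N)), x (Ordinal (isT : (2 < 3)%N)))).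
    by case=> [[b0 b1] b2] _; rewrite /mk !ffunE.
  move=> x _; apply/ffunP => i; rewrite ffunE.
  by case: i => [[|[|[|//]]]] Hi /=; congr (x _); apply/val_inj.
rewrite [RHS]pair_bigA [RHS]pair_bigA /=.
apply: eq_bigr => -[[b0 b1] b2] _ /=.
by rewrite prodw_mk.
Qed.


Local Open Scope classical_set_scope.

Lemma pmf_ge0 (a : R) b : 0 <= a <= 1 -> 0 <= bern_pmf a b.
Proof. by case: b => /andP[h1 h2] /=; lra. Qed.

Lemma Pr_ge0 (a : R) (k : nat) E : 0 <= a <= 1 -> 0 <= Pr a (k := k) E.
Proof.
move=> ha; apply: sumr_ge0 => x _; apply: prodr_ge0 => i _; exact: pmf_ge0.
Qed.

Lemma Pr_le1 (a : R) E : 0 <= a <= 1 -> Pr a (k := 3) E <= 1.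
Proof.
move=> ha; rewrite Pr3.
apply: (@le_trans _ _ (\sum_(b0 : bool) \sum_(b1 : bool) \sum_(b2 : bool)
     (bern_pmf a b0 * bern_pmf a b1 * bern_pmf a b2))).
  apply: ler_sum => b0 _; apply: ler_sum => b1 _; apply: ler_sum => b2 _.
  case: (E _) => //; apply: mulr_ge0; [apply: mulr_ge0|]; exact: pmf_ge0.
rewrite !big_bool /= le_eqVlt; apply/orP; left; apply/eqP; ring.
Qed.

Lemma Pr0 (a : R) (k : nat) (E : pred {ffun 'I_k -> bool}) :
  (forall x, ~~ E x) -> Pr a E = 0.
Proof. by move=> h; rewrite /Pr big_pred0 // => x; apply/negbTE. Qed.

Lemma Xv_le1 k (x : {ffun 'I_k -> bool}) i : Xv R x i <= 1.
Proof. by rewrite /Xv; case: (x i). Qed.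

Lemma sum_le3 (x : {ffun 'I_3 -> bool}) : \sum_(i < 3) Xv R x i <= 3.
Proof.
apply: (@le_trans _ _ (\sum_(i < 3) (1 : R))); first by apply: ler_sum => i _; exact: Xv_le1.
by rewrite sumr_const card_ord.
Qed.

Lemma PrX0 (a : R) : Pr a (fun x : {ffun 'I_3 -> bool} => x ord0) = a.
Proof. rewrite Pr3 /mk; rewrite !big_bool /= !ffunE /=; ring. Qed.

Lemma SRev_val (a : R) : 0 < a <= 1 -> SRev a (ord0 : 'I_3) = 3 * a.
Proof.
move=> /andP[a0 a1]; rewrite /SRev; congr (_ * _).
set f := (fun p : R => _).
have ub : ubound (f @` [set p | 0 <= p]) a.
  move=> _ [p /= p0 <-]; rewrite /f.
  have [p1|p1] := lerP p 1.
    have [->|pn0] := eqVneq p 0; first by rewrite mul0r ltW.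
    have pp : 0 < p by rewrite lt_neqAle eq_sym pn0.
    rewrite (_ : Pr _ _ = Pr a (fun x : {ffun 'I_3 -> bool} => x ord0)); last first.
      rewrite /Pr; apply: eq_bigl => x; rewrite /Xv; case: (x ord0) => /=.
        exact/idP.
      by apply/negbTE; rewrite -ltNge.
    by rewrite PrX0; nra.
  rewrite Pr0 ?mulr0 ?ltW // => x; rewrite -ltNge.
exact: (le_lt_trans (Xv_le1 _ x ord0) p1).
have ina : (f @` [set p | 0 <= p]) a.
  exists 1; rewrite /= ?ler01 //.
  rewrite /f mul1r -[RHS]PrX0; rewrite /Pr; apply: eq_bigl => x.
  by rewrite /Xv; case: (x ord0); rewrite /= ?lexx ?ler10.
apply/eqP; rewrite eq_le; apply/andP; split.
  by apply: ge_sup => //; exists a.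
by apply: ub_le_sup => //; exists a.
Qed.

Lemma PrS (a : R) (n : nat) :
  Pr a (fun x : {ffun 'I_3 -> bool} => n%:R <= \sum_(i < 3) Xv R x i) =
  \sum_(b0 : bool) \sum_(b1 : bool) \sum_(b2 : bool)
     (if (n <= b0 + b1 + b2)%N then bern_pmf a b0 * bern_pmf a b1 * bern_pmf a b2 else 0).
Proof.
rewrite Pr3; apply: eq_bigr => b0 _; apply: eq_bigr => b1 _; apply: eq_bigr => b2 _.
by rewrite sum_mk ler_nat.
Qed.

End S.

Theorem lemma3 (R : realType) (c : R) :
  0 < c -> c <= 3 ->
  BRev (c / 3) 3 / SRev (c / 3) (ord0 : 'I_3) > 3 / 5.
Proof.
move=> c0 c3.
set a := c / 3.
have a0 : 0 < a by rewrite /a; apply: divr_gt0.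
have a1 : a <= 1 by rewrite /a ler_pdivrMr // mul1r.
have ha : 0 <= a <= 1 by rewrite ltW.
rewrite SRev_val ?a0 // ltr_pdivlMr ?mulr_gt0 //.
rewrite /BRev; set f := (fun p : R => _).
have ub : has_ubound (f @` [set p | 0 <= p]).
  exists 3 => _ [p /= p0 <-]; rewrite /f.
  have [p3|p3] := lerP p 3.
    apply: (@le_trans _ _ (3 * 1)); last by rewrite mulr1.
    by apply: ler_pM => //; [exact: Pr_ge0 | exact: Pr_le1].
  rewrite Pr0 ?mulr0 // => x; rewrite -ltNge.
  apply: le_lt_trans p3; exact: sum_le3.
have val n : f n%:R <= sup (f @` [set p | 0 <= p]).
  by apply: ub_le_sup => //; exists n%:R => //=; rewrite ler0n.
have v1 := val 1%N; have v2 := val 2%N.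
rewrite /f !PrS !big_bool /= in v1 v2.
have [al|ag] := lerP a (9/20).
  apply: lt_le_trans v1; nra.
have h : 0 <= (a - 9/20) * (1 - a) by apply: mulr_ge0; rewrite subr_ge0 // ltW.
have h2 : 0 <= a * ((a - 9/20) * (1 - a)) by apply: mulr_ge0; [exact: ltW | exact: h].
apply: lt_le_trans v2; nra.
by rewrite invr_gt0.
Qed.
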